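(* Let $n\ge1$. For $v,w\in\mathfrak{S}_n$ set $$\lambda(v,w)=\#\{J\subseteq[n-1]:\mathrm{Des}(w^{-1}v_J)\subseteq J,\ \#J\text{ odd}\}-\#\{J\subseteq[n-1]:\mathrm{Des}(w^{-1}v_J)\subseteq J,\ \#J\text{ even}\}.$$ Then the antipode $S$ of $\mathfrak{S}Sym$ satisfies $S(\mathcal{F}_v)=\sum_{w\in\mathfrak{S}_n}\lambda(v,w)\,\mathcal{F}_w$.
   Context: Permutations in one-line notation, product is composition $(uv)(i)=u(v(i))$. $\mathrm{Des}(x)=\{p\in[n-1]:x_p>x_{p+1}\}$. $\mathrm{st}(a_1,\ldots,a_m)\in\mathfrak{S}_m$ is the permutation with the same relative order as the distinct integers $a_i$. For $x\in\mathfrak{S}_a,y\in\mathfrak{S}_b$, $x\times y\in\mathfrak{S}_{a+b}$ has $(x\times y)(i)=x_i$ ($i\le a$), $(x\times y)(a+j)=a+y_j$. For $v\in\mathfrak{S}_n$ and $J=\{p_1<\cdots<p_k\}\subseteq[n-1]$, $v_J=\mathrm{st}(v_1,\ldots,v_{p_1})\times\mathrm{st}(v_{p_1+1},\ldots,v_{p_2})\times\cdots\times\mathrm{st}(v_{p_k+1},\ldots,v_n)$, $v_\emptyset=v$. $\mathfrak{S}Sym$ is the graded connected Hopf algebra over $\mathbb{Q}$ with basis $\{\mathcal{F}_u:u\in\mathfrak{S}_n,n\ge0\}$, product $\mathcal{F}_u\cdot\mathcal{F}_v=\sum_{\zeta}\mathcal{F}_{(u\times v)\cdot\zeta^{-1}}$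 over $\zeta\in\mathfrak{S}_{p+q}$ with $\zeta_1<\cdots<\zeta_p$, $\zeta_{p+1}<\cdots<\zeta_{p+q}$ (for $u\in\mathfrak{S}_p,v\in\mathfrak{S}_q$), and coproduct $\Delta(\mathcal{F}_u)=\sum_{p=0}^n\mathcal{F}_{\mathrm{st}(u_1..u_p)}\otimes\mathcal{F}_{\mathrm{st}(u_{p+1}..u_n)}$. *)

(* Defs.v *)
From mathcomp Require Import all_boot all_order all_algebra.
Set Implicit Arguments. Unset Strict Implicit. Unset Printing Implicit Defensive.
Import Order.TTheory GRing.Theory Num.Theory.
Local Open Scope ring_scope.

(* Permutations of [n] = {1..n} in one-line notation, as sequences of nats. *)
Definition is_perm (w : seq nat) : bool := perm_eq w (iota 1 (size w)).
Definition perms (n : nat) : seq (seq nat) := permutations (iota 1 n).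

Definition oneline_comp (u v : seq nat) : seq nat := map (fun i => nth 0%N u i.-1) v.
Definition oneline_inv (w : seq nat) : seq nat :=
  map (fun i => (index i w).+1) (iota 1 (size w)).
Definition st (a : seq nat) : seq nat :=
  map (fun x => (count (fun y => (y < x)%N) a).+1) a.
Definition cross (x y : seq nat) : seq nat := x ++ map (addn (size x)) y.

Definition shuffles (p q : nat) : seq (seq nat) :=
  [seq z <- perms (p + q) | sorted ltn (take p z) && sorted ltn (drop p z)].

(* F_u . F_v = sum of F_x for x in prodF u v (as a multiset) *)
Definition prodF (u v : seq nat) : seq (seq nat) :=
  [seq oneline_comp (cross u v) (oneline_inv z) | z <- shuffles (size u) (size v)].

(* Elements of SSym: coefficient functions on the basis {F_w}. *)
Definition Elt := seq nat -> rat.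
Definition basisF (u : seq nat) : Elt := fun w => (w == u)%:R.

Definition is_SSym_elt (x : Elt) : Prop :=
  (forall w, x w != 0 -> is_perm w) /\
  (exists N, forall w, x w != 0 -> (size w <= N)%N).

(* coefficient of F_w in x . F_v, for x supported on permutations *)
Definition mulrF (x : Elt) (v : seq nat) : Elt := fun w =>
  if (size v <= size w)%N then
    \sum_(u <- perms (size w - size v)) x u * (count_mem w (prodF u v))%:R
  else 0.
(* coefficient of F_w in F_v . x, for x supported on permutations *)
Definition mullF (v : seq nat) (x : Elt) : Elt := fun w =>
  if (size v <= size w)%N then
    \sum_(u <- perms (size w - size v)) x u * (count_mem w (prodF v u))%:R
  else 0.

(* S (given on the basis, extended linearly) is the antipode of SSym:
   m (S (x) id) Delta = eta eps = m (id (x) S) Delta, where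
   Delta F_u = sum_p F_{st(u_1..u_p)} (x) F_{st(u_{p+1}..u_n)},
   eps F_u = [n = 0], eta 1 = F_{empty}. *)
Definition is_antipode (S : seq nat -> Elt) : Prop :=
  (forall u, is_SSym_elt (S u)) /\
  (forall u, is_perm u -> forall w,
     \sum_(p < (size u).+1) mulrF (S (st (take p u))) (st (drop p u)) w
     = (size u == 0%N)%:R * basisF [::] w) /\
  (forall u, is_perm u -> forall w,
     \sum_(p < (size u).+1) mullF (st (take p u)) (S (st (drop p u))) w
     = (size u == 0%N)%:R * basisF [::] w).

(* Des(x) = {p in [n-1] : x_p > x_{p+1}} as a subset of 'I_n (positions 1..n-1) *)
Definition des_sub (n : nat) (x : seq nat) (J : {set 'I_n}) : bool :=
  [forall p : 'I_n, ((0 < p)%N && (nth 0%N x p < nth 0%N x p.-1)%N) ==> (p \in J)].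

(* cut s at the absolute positions ps (increasing), current offset off *)
Fixpoint cuts (s : seq nat) (ps : seq nat) (off : nat) : seq (seq nat) :=
  match ps with
  | [::] => [:: s]
  | p :: ps' => take (p - off) s :: cuts (drop (p - off) s) ps' p
  end.

(* J subset of [n-1] represented as {set 'I_n} with 0 \notin J *)
Definition subJ (n : nat) (J : {set 'I_n}) : bool := [forall i in J, (0 < i)%N].

(* v_J = st(v_1..v_{p1}) x st(..) x ... x st(v_{pk+1}..v_n) *)
Definition vJ (v : seq nat) (J : {set 'I_(size v)}) : seq nat :=
  foldr cross [::] (map st (cuts v (sort leq [seq val i | i <- enum J]) 0)).

Definition goodJ (v w : seq nat) (J : {set 'I_(size v)}) : bool :=
  subJ J && des_sub (oneline_comp (oneline_inv w) (vJ J)) J.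

Definition lambda (v w : seq nat) : int :=
  (#|[set J : {set 'I_(size v)} | goodJ w J & odd #|J|]|%:Z
   - #|[set J : {set 'I_(size v)} | goodJ w J & ~~ odd #|J|]|%:Z)%R.

Example st_ex : st [:: 5; 2; 9] = [:: 2; 1; 3]. Proof. by []. Qed.
Example cross_ex : cross [:: 2; 1] [:: 1] = [:: 2; 1; 3]. Proof. by []. Qed.
Example prod_ex : prodF [:: 1] [:: 1] = [:: [:: 1; 2]; [:: 2; 1]]. Proof. by []. Qed.

(* Main.v *)
Require Import Defs.
From mathcomp Require Import all_boot all_order all_algebra.
From mathcomp Require Import zify.
Import Order.TTheory GRing.Theory Num.Theory.

Set Implicit Arguments. Unset Strict Implicit. Unset Printing Implicit Defensive.
Section Part1.

Lemma permsP k x : (x \in perms k) = perm_eq x (iota 1 k).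
Proof. by rewrite /perms mem_permutations. Qed.

Lemma perms_size k x : x \in perms k -> size x = k.
Proof. by rewrite permsP => /perm_size ->; rewrite size_iota. Qed.

Lemma perms_mem k x i : x \in perms k -> (i \in x) = (0 < i <= k).
Proof. by rewrite permsP => /perm_mem ->; rewrite mem_iota; lia. Qed.

Lemma perms_uniq k x : x \in perms k -> uniq x.
Proof. by rewrite permsP => /perm_uniq ->; apply: iota_uniq. Qed.

Lemma perms_uniq_seq k : uniq (perms k).
Proof. exact: permutations_uniq. Qed.

Lemma is_permE w : is_perm w = (w \in perms (size w)).
Proof. by rewrite permsP. Qed.

Lemma iota1 k : iota 1 k = map S (iota 0 k).
Proof. by rewrite (iotaDl 1 0). Qed.

Lemma comp_id_r k x : size x = k -> oneline_comp x (iota 1 k) = x.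
Proof.
move=> <-; rewrite /oneline_comp iota1 -map_comp.
by rewrite (eq_map (g := nth 0 x)) // -/(mkseq _ _) mkseq_nth.
Qed.

Lemma comp_id_l k x : x \in perms k -> oneline_comp (iota 1 k) x = x.
Proof.
move=> hx; rewrite /oneline_comp; apply: map_id_in => i.
rewrite (perms_mem _ hx) => /andP[h1 h2]; rewrite nth_iota; lia.
Qed.

Lemma comp_assoc k x y z : z \in perms k -> size y = k ->
  oneline_comp x (oneline_comp y z) = oneline_comp (oneline_comp x y) z.
Proof.
move=> hz hy; rewrite /oneline_comp -map_comp. apply/eq_in_map => i.
rewrite (perms_mem _ hz) => /andP[h1 h2] /=; rewrite (nth_map 0) //; lia.
Qed.

Lemma map_index_self (x : seq nat) : uniq x -> map (fun i => (index i x).+1) x = iota 1 (size x).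
Proof.
move=> ux; have ex : x = map (nth 0 x) (iota 0 (size x)) by rewrite -/(mkseq _ _) mkseq_nth.
rewrite {2}ex -map_comp iota1.
by apply/eq_in_map => i; rewrite mem_iota /= => hi; rewrite index_uniq.
Qed.

Lemma inv_perm k x : x \in perms k -> oneline_inv x \in perms k.
Proof.
move=> hx; rewrite /oneline_inv (perms_size hx) permsP.
have := hx; rewrite permsP perm_sym => /(perm_map (fun i => (index i x).+1)) h.
apply: (perm_trans h); rewrite map_index_self ?(perms_size hx) //.
exact: perms_uniq hx.
Qed.

Lemma size_inv x : size (oneline_inv x) = size x.
Proof. by rewrite /oneline_inv size_map size_iota. Qed.

Lemma comp_inv_l k x : x \in perms k -> oneline_comp (oneline_inv x) x = iota 1 k.
Proof.
move=> hx; rewrite -(perms_size hx) -map_index_self ?(perms_uniq hx) //.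
rewrite /oneline_comp; apply/eq_in_map => i.
rewrite (perms_mem _ hx) => /andP[h1 h2]; rewrite /oneline_inv (nth_map 0).
  rewrite nth_iota; first by congr (_.+1); congr index; lia.
  rewrite (perms_size hx); lia.
rewrite size_iota (perms_size hx); lia.
Qed.

Lemma comp_inv_r k x : x \in perms k -> oneline_comp x (oneline_inv x) = iota 1 k.
Proof.
move=> hx; rewrite /oneline_comp /oneline_inv -map_comp (perms_size hx).
rewrite map_id_in // => i hi /=.
by rewrite nth_index // (perms_mem _ hx); move: hi; rewrite mem_iota; lia.
Qed.

Lemma comp_perm k x y : x \in perms k -> y \in perms k -> oneline_comp x y \in perms k.
Proof.
move=> hx hy; rewrite permsP; have := hy; rewrite permsP.
move=> /(perm_map (fun i => nth 0 x i.-1)) h; apply: (perm_trans h).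
by have := comp_id_r (perms_size hx); rewrite /oneline_comp => ->; rewrite -permsP.
Qed.

Lemma inv_inv k x : x \in perms k -> oneline_inv (oneline_inv x) = x.
Proof.
move=> hx; have hi := inv_perm hx; have hii := inv_perm hi.
rewrite -(comp_id_r (perms_size hii)) -(comp_inv_l hx) (comp_assoc _ hx).
  by rewrite (comp_inv_l hi) (comp_id_l hx).
by rewrite (perms_size hi).
Qed.

Lemma comp_eq_id k x y : x \in perms k -> y \in perms k ->
  (oneline_comp x y == iota 1 k) = (y == oneline_inv x).
Proof.
move=> hx hy; apply/eqP/eqP => [h|->]; last exact: comp_inv_r.
rewrite -(comp_id_l hy) -(comp_inv_l hx) -(comp_assoc _ hy) ?h.
  by rewrite comp_id_r // (perms_size (inv_perm hx)).
by rewrite (perms_size hx).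
Qed.

End Part1.
Section Part2.

Definition desn (n : nat) (x : seq nat) (ps : seq nat) : bool :=
  all (fun i => (nth 0 x i < nth 0 x i.-1) ==> (i \in ps)) (iota 1 n.-1).

Lemma desnP n x ps :
  reflect (forall i, 0 < i -> i < n -> nth 0 x i < nth 0 x i.-1 -> i \in ps)
          (desn n x ps).
Proof.
apply: (iffP allP) => h i.
  move=> h1 h2 h3; have := h i; rewrite mem_iota h3 /=; apply; lia.
rewrite mem_iota => hi; apply/implyP; apply: h; lia.
Qed.

Lemma desn_eq n x ps ps' : (forall i, 0 < i -> i < n -> (i \in ps) = (i \in ps')) ->
  desn n x ps = desn n x ps'.
Proof.
move=> h; apply/desnP/desnP => H i h1 h2 h3.
  by rewrite -h //; apply: H.
by rewrite h //; apply: H.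
Qed.

Lemma desn_cat n p A B ps : size A = p -> p <= n -> all (fun j => j < p) ps ->
  desn n (A ++ B) (rcons ps p) = desn p A ps && desn (n - p) B [::].
Proof.
move=> hA hpn /allP hps; apply/desnP/andP.
  move=> H; split; apply/desnP => i h1 h2 h3.
    have := H i h1 ltac:(lia); rewrite !nth_cat hA.
    have -> : (i < p) = true by lia. have -> : (i.-1 < p) = true by lia.
    move=> /(_ h3); rewrite mem_rcons in_cons => /orP[/eqP|] //; lia.
  have := H (i + p) ltac:(lia) ltac:(lia); rewrite !nth_cat hA.
  have -> : (i + p < p) = false by lia. have -> : ((i + p).-1 < p) = false by lia.
  have -> : i + p - p = i by lia. have -> : (i + p).-1 - p = i.-1 by lia.
  move=> /(_ h3); rewrite mem_rcons in_cons => /orP[/eqP|]; first lia.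
  by move=> /hps; lia.
case=> /desnP HA /desnP HB i h1 h2; rewrite !nth_cat hA.
case: (ltngtP i p) => hip.
  have -> : (i.-1 < p) = true by lia. move=> h3; rewrite mem_rcons in_cons; apply/orP; right.
  by apply: HA.
  have -> : (i.-1 < p) = false by lia.
  have e : (i.-1 - p) = (i - p).-1 by lia. rewrite e => h3.
  by have := HB (i - p) ltac:(lia) ltac:(lia) h3.
by move=> _; rewrite hip mem_rcons mem_head.
Qed.

Lemma desn_sorted n x : size x = n -> desn n x [::] = sorted leq x.
Proof.
move=> hx; apply/desnP/(sortedP 0) => H i.
  move=> hi; have := H i.+1 ltac:(lia) ltac:(lia); rewrite /= in_nil => h.
  by rewrite leqNgt; apply/negP => /h.
move=> h1 h2; have := H i.-1 ltac:(lia); have -> : i.-1.+1 = i by lia.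
by rewrite in_nil ltnNge => ->.
Qed.

Lemma desn_mono n (f : nat -> nat) (x : seq nat) ps : {in x &, forall a b, (f a < f b) = (a < b)} ->
  n <= size x -> desn n (map f x) ps = desn n x ps.
Proof.
move=> hf hn.
have e : forall i, 0 < i -> i < n ->
  (nth 0 (map f x) i < nth 0 (map f x) i.-1) = (nth 0 x i < nth 0 x i.-1).
  move=> i h1 h2.
  have s1 : i < size x by apply: (leq_trans h2 hn).
  have s2 : i.-1 < size x by apply: (leq_trans _ hn); lia.
  rewrite !(nth_map 0) //.
  by rewrite hf ?mem_nth.
by apply/desnP/desnP => H i h1 h2 h3; apply: H => //; rewrite ?e // -?e.
Qed.

Lemma perm_sorted_id k x : x \in perms k -> sorted leq x -> x = iota 1 k.
Proof.
move=> hx hs; apply: (sorted_eq leq_trans anti_leq hs (iota_sorted _ _)).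
by rewrite -permsP.
Qed.

Lemma desn_perm_nil k x : x \in perms k -> desn k x [::] = (x == iota 1 k).
Proof.
move=> hx; rewrite desn_sorted ?(perms_size hx) //.
apply/idP/eqP => [|->]; [exact: perm_sorted_id | exact: iota_sorted].
Qed.

Definition rk (t : seq nat) (x : nat) := (count (fun y => y < x) t).+1.

Lemma stE t : st t = map (rk t) t.
Proof. by []. Qed.

Lemma rk_lt (t : seq nat) (a b : nat) : uniq t -> a \in t -> b \in t -> a < b -> rk t a < rk t b.
Proof.
move=> ut ha hb hab; rewrite /rk ltnS.
have h1 := count_predUI (fun y => y < a) (pred1 a) t.
have h2 : count (predI (fun y => y < a) (pred1 a)) t = 0.
  by apply/eqP; rewrite -leqn0 leqNgt -has_count; apply/hasP => -[y _ /= /andP[h /eqP]]; lia.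
have h3 : count (pred1 a) t = 1 by rewrite count_uniq_mem ?ha.
have h4 : count (predU (fun y => y < a) (pred1 a)) t <= count (fun y => y < b) t.
  by apply: sub_count => y /= /orP[|/eqP]; lia.
have := h4; rewrite -(addn0 (count (predU _ _) t)) -h2 h1 h3 addn1; lia.
Qed.

Lemma rk_mono t : uniq t -> {in t &, forall a b, (rk t a < rk t b) = (a < b)}.
Proof.
move=> ut a b ha hb; case: (ltngtP a b) => h.
- by rewrite rk_lt.
- by apply/negbTE; rewrite -leqNgt ltnW // rk_lt.
- by rewrite h ltnn.
Qed.

Lemma st_map_mono f s : {in s &, forall a b, (f a < f b) = (a < b)} -> st (map f s) = st s.
Proof.
move=> hf; rewrite /st -map_comp; apply/eq_in_map => a ha /=.
rewrite count_map; congr (_.+1); apply: eq_in_count => y hy /=; exact: hf.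
Qed.

Lemma rk_bound (t : seq nat) (a : nat) : uniq t -> a \in t -> 0 < rk t a <= size t.
Proof.
move=> ut ha; rewrite /rk /=; have := count_predC (fun y => y < a) t.
have : 0 < count (predC (fun y => y < a)) t.
  by rewrite -has_count; apply/hasP; exists a => //=; rewrite ltnn.
lia.
Qed.

Lemma rk_inj (t : seq nat) : uniq t -> {in t &, injective (rk t)}.
Proof.
move=> ut a b ha hb e; case: (ltngtP a b) => // h.
  by have := rk_lt ut ha hb h; rewrite e ltnn.
by have := rk_lt ut hb ha h; rewrite e ltnn.
Qed.

Lemma st_perm (t : seq nat) : uniq t -> st t \in perms (size t).
Proof.
move=> ut; rewrite permsP stE; apply: uniq_perm.
- by rewrite map_inj_in_uniq //; apply: rk_inj.
- exact: iota_uniq.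
have hs : {subset map (rk t) t <= iota 1 (size t)}.
  move=> y /mapP[a ha ->]; rewrite mem_iota; have := rk_bound ut ha; lia.
have hu : uniq (map (rk t) t) by rewrite map_inj_in_uniq //; apply: rk_inj.
have := uniq_min_size hu hs; rewrite size_map size_iota leqnn => /(_ isT) [] //.
Qed.

Lemma count_iota i k : count (fun y => y < i) (iota 1 k) = minn i.-1 k.
Proof.
elim: k => [|k IH]; first by rewrite minn0.
have -> : iota 1 k.+1 = iota 1 k ++ [:: 1 + k] by rewrite -[k.+1]addn1 iotaD.
by rewrite count_cat IH /=; lia.
Qed.

Lemma st_id k (x : seq nat) : x \in perms k -> st x = x.
Proof.
move=> hx; rewrite stE; apply: map_id_in => i hi; rewrite /rk.
have hp : perm_eq x (iota 1 k) by rewrite -permsP.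
rewrite (permP hp) count_iota.
move: hi; rewrite (perms_mem _ hx); lia.
Qed.

End Part2.
Section Part3.

Lemma cross_perm p q u b : u \in perms p -> b \in perms q -> cross u b \in perms (p + q).
Proof.
move=> hu hb; rewrite permsP /cross (perms_size hu) iotaD.
apply: perm_cat; first by rewrite -permsP.
rewrite addnC iotaDl; apply: perm_map; by rewrite -permsP.
Qed.

Lemma comp_cross sig u b : oneline_comp sig (cross u b) =
  oneline_comp sig u ++ oneline_comp sig (map (addn (size u)) b).
Proof. by rewrite /oneline_comp /cross map_cat. Qed.

Lemma comp_inv_eq k X z w : X \in perms k -> z \in perms k -> w \in perms k ->
  (oneline_comp X (oneline_inv z) == w) = (z == oneline_comp (oneline_inv w) X).
Proof.
move=> hX hz hw; have hzi := inv_perm hz; have hwi := inv_perm hw.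
have sX := perms_size hX; have sz := perms_size hz; have sw := perms_size hw.
have szi := perms_size hzi; have swi := perms_size hwi.
have eX : forall w', w' \in perms k -> oneline_comp X (oneline_inv z) = w' ->
    X = oneline_comp w' z.
  move=> w' hw' H; rewrite -H -(comp_assoc _ hz) ?szi //.
  by rewrite (comp_inv_l hz) (comp_id_r sX).
apply/eqP/eqP => [H|H].
  rewrite (eX w hw H) (comp_assoc _ hz) ?swi ?sw //.
  by rewrite (comp_inv_l hw) (comp_id_l hz).
have eX2 : X = oneline_comp w z.
  by rewrite H (comp_assoc _ hX) ?swi // (comp_inv_r hw) (comp_id_l hX).
rewrite eX2 -(comp_assoc _ hzi) ?sz // (comp_inv_r hz) (comp_id_r sw).
by [].
Qed.


Lemma shuf_cond n p z : z \in perms n -> p <= n ->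
  sorted ltn (take p z) && sorted ltn (drop p z) = desn n z [:: p].
Proof.
move=> hz hp; have sz := perms_size hz; have uz := perms_uniq hz.
rewrite -{3}(cat_take_drop p z).
have -> : [:: p] = rcons [::] p by [].
rewrite desn_cat // ?size_takel ?sz //.
rewrite !desn_sorted ?size_takel ?size_drop ?sz //.
rewrite !ltn_sorted_uniq_leq.
by rewrite take_uniq // drop_uniq.
Qed.

Lemma count_prodF p q u b w : u \in perms p -> b \in perms q -> w \in perms (p + q) ->
  count_mem w (prodF u b) = desn (p + q) (oneline_comp (oneline_inv w) (cross u b)) [:: p].
Proof.
move=> hu hb hw; rewrite /prodF count_map (perms_size hu) (perms_size hb).
have hX := cross_perm hu hb.
rewrite (@eq_in_count _ _ (pred1 (oneline_comp (oneline_inv w) (cross u b)))); last first.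
  move=> z; rewrite /shuffles mem_filter => /andP[_ hz] /=.
  by rewrite (comp_inv_eq hX hz hw).
rewrite count_uniq_mem; last by rewrite filter_uniq // perms_uniq_seq.
rewrite /shuffles mem_filter comp_perm ?inv_perm // andbT.
have hz0 : oneline_comp (oneline_inv w) (cross u b) \in perms (p + q) by apply: comp_perm; [apply: inv_perm|].
by rewrite (shuf_cond hz0) // leq_addr.
Qed.

Lemma count_prodF0 p q u b w : u \in perms p -> b \in perms q -> w \notin perms (p + q) ->
  count_mem w (prodF u b) = 0.
Proof.
move=> hu hb hw; apply/count_memPn; apply: contra hw => /mapP[z hz ->].
move: hz; rewrite /shuffles mem_filter (perms_size hu) (perms_size hb) => /andP[_ hz].
exact: comp_perm (cross_perm hu hb) (inv_perm hz).
Qed.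

Local Open Scope ring_scope.

Lemma sum_pred1 (T : eqType) (s : seq T) (F : T -> rat) y : uniq s -> y \in s ->
  \sum_(u <- s) F u * (u == y)%:R = F y.
Proof.
move=> us ys; rewrite (bigD1_seq y) //= eqxx mulr1 big1 ?addr0 //.
by move=> u /negPf ->; rewrite mulr0.
Qed.

Lemma mulrF_nil (x : Elt) w : (forall w, x w != 0 -> is_perm w) -> mulrF x [::] w = x w.
Proof.
move=> hx; rewrite /mulrF /= subn0.
set k := size w.
have hc : forall u, u \in perms k -> count_mem w (prodF u [::]) = (u == w) :> nat.
  move=> u hu; have hb : [::] \in perms 0 by [].
  case hw : (w \in perms k).
    have hw' : w \in perms (k + 0) by rewrite addn0.
    rewrite (count_prodF hu hb hw') /cross cats0 addn0.
    rewrite (@desn_eq _ _ _ [::]); last by move=> i _ h; rewrite !inE; apply/negbTE; rewrite neq_ltn h.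
    rewrite desn_perm_nil; last by apply: comp_perm; [apply: inv_perm|].
    by rewrite comp_eq_id ?inv_perm // (inv_inv hw).
  rewrite (@count_prodF0 k 0) ?addn0 ?hw //.
  suff /negPf -> : u != w by []. by apply: contraFN hw => /eqP <-.
rewrite (eq_big_seq (fun u => x u * (u == w)%:R)); last by move=> u hu; rewrite hc.
case hw : (w \in perms k); first by rewrite sum_pred1 // perms_uniq_seq.
have -> : x w = 0 by apply/eqP; apply: contraFT hw => /hx; rewrite is_permE.
rewrite big1_seq // => u /andP[_ hu]; have : u != w by apply: contraFN hw => /eqP <-.
by move/negPf ->; rewrite mulr0.
Qed.

End Part3.
Section Part4.

Definition vcut (v : seq nat) (ps : seq nat) : seq nat :=
  foldr cross [::] (map st (cuts v ps 0)).

Lemma size_cross (x y : seq nat) : size (cross x y) = size x + size y.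
Proof. by rewrite /cross size_cat size_map. Qed.

Lemma cross_nil_l (y : seq nat) : cross [::] y = y.
Proof. by rewrite /cross /= map_id_in. Qed.

Lemma cross_nil_r (y : seq nat) : cross y [::] = y.
Proof. by rewrite /cross cats0. Qed.

Lemma cross_assoc (x y z : seq nat) : cross x (cross y z) = cross (cross x y) z.
Proof.
rewrite /cross map_cat catA -map_comp size_cat size_map; congr (_ ++ _).
by apply: eq_map => a /=; rewrite addnA.
Qed.

Lemma foldr_cross_rcons (l : seq (seq nat)) y :
  foldr cross [::] (rcons l y) = cross (foldr cross [::] l) y.
Proof.
elim: l => [|a l IH] /=; first by rewrite cross_nil_l cross_nil_r.
by rewrite IH cross_assoc.
Qed.

Lemma path_leq_last off (ps : seq nat) p : path leq off (rcons ps p) -> off <= p.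
Proof.
move=> /(order_path_min leq_trans) /allP; apply; by rewrite mem_rcons mem_head.
Qed.

Lemma cuts_rcons (s : seq nat) ps p off : path leq off (rcons ps p) ->
  cuts s (rcons ps p) off = cuts (take (p - off) s) ps off ++ [:: drop (p - off) s].
Proof.
elim: ps s off => [|q ps IH] s off //= /andP[hq hp].
have hqp := path_leq_last hp.
rewrite IH // take_takel; last lia.
rewrite drop_drop take_drop.
by have -> : p - q + (q - off) = p - off by lia.
Qed.

Lemma cuts_map (f : nat -> nat) s ps off :
  cuts (map f s) ps off = map (map f) (cuts s ps off).
Proof.
elim: ps s off => [|q ps IH] s off //=.
by rewrite -map_drop IH map_take.
Qed.

Lemma cuts_sub (s : seq nat) ps off blk : blk \in cuts s ps off -> {subset blk <= s}.
Proof.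
elim: ps s off => [|q ps IH] s off /=; first by rewrite inE => /eqP ->.
rewrite inE => /orP[/eqP ->|/IH h x /h]; first exact: mem_take.
exact: mem_drop.
Qed.

Lemma vcut_nil v : vcut v [::] = st v.
Proof. by rewrite /vcut /= cross_nil_r. Qed.

Lemma vcut_rcons v ps p : uniq v -> path leq 0 (rcons ps p) ->
  vcut v (rcons ps p) = cross (vcut (st (take p v)) ps) (st (drop p v)).
Proof.
move=> uv hp; rewrite /vcut cuts_rcons // subn0 map_cat cats1 foldr_cross_rcons.
congr (cross (foldr _ _ _) _).
set t := take p v; have ut : uniq t by rewrite take_uniq.
rewrite stE cuts_map -map_comp; apply/eq_in_map => blk hb /=.
symmetry; apply: st_map_mono => a b ha hb'; apply: rk_mono => //; exact: (cuts_sub hb).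
Qed.

Fixpoint subs (k : nat) : seq (seq nat) :=
  if k is k'.+1 then subs k' ++ map (fun s => rcons s k'.+1) (subs k') else [:: [::]].

Lemma sorted_rcons_ltn (s : seq nat) x :
  sorted ltn (rcons s x) = sorted ltn s && all (fun y => y < x) s.
Proof. by rewrite !(sorted_pairwise ltn_trans) pairwise_rcons andbC. Qed.

Lemma mem_subs k s : (s \in subs k) = sorted ltn s && all (fun x => 0 < x <= k) s.
Proof.
elim: k s => [|k IH] s.
  case: s => [|a s] //=; rewrite inE /=; apply/esym/negbTE.
  by rewrite negb_and; apply/orP; right; rewrite negb_and; apply/orP; left; lia.
rewrite /= mem_cat IH; apply/orP/andP.
  case=> [/andP[h1 h2]|/mapP[s' hs' ->]].
    split=> //; apply: sub_all h2 => y; lia.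
  move: hs'; rewrite IH => /andP[h1 h2].
  rewrite sorted_rcons_ltn all_rcons h1 /=; split; last first.
    by apply/andP; split; [lia| apply: sub_all h2 => y; lia].
  by apply: sub_all h2 => y; lia.
case=> hs ha; case/lastP: s hs ha => [|s' x] hs ha; first by left.
move: hs ha; rewrite sorted_rcons_ltn all_rcons => /andP[h1 h2] /andP[h3 h4].
case: (ltngtP x k.+1) => hx.
- left; rewrite all_rcons h1 h2 /=.
  apply/andP; split; first lia.
  apply/allP => y hy; have := allP h2 y hy; have := allP h4 y hy; lia.
- lia.
- right; apply/mapP; exists s' => //; rewrite ?hx // IH h1 /=.
  apply/allP => y hy; have := allP h2 y hy; have := allP h4 y hy; lia.
Qed.

Lemma uniq_subs k : uniq (subs k).
Proof.
elim: k => [|k IH] //=; rewrite cat_uniq IH /=; apply/andP; split.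
  apply/hasPn => s /mapP[s' _ ->]; rewrite mem_subs all_rcons; lia.
by rewrite map_inj_uniq // => a b /rcons_inj [->].
Qed.

Local Open Scope ring_scope.

Lemma sum_subs k (h : seq nat -> rat) :
  \sum_(s <- subs k) h s = h [::] + \sum_(p < k) \sum_(s <- subs p) h (rcons s p.+1).
Proof.
elim: k => [|k IH]; first by rewrite /= big_seq1 big_ord0 addr0.
by rewrite /= big_cat big_map IH big_ord_recr /= addrA.
Qed.

End Part4.
Section Part5.

Definition sJ n (J : {set 'I_n}) : seq nat := sort leq [seq val i | i <- enum J].

Lemma mem_sJ n (J : {set 'I_n}) (i : 'I_n) : (val i \in sJ J) = (i \in J).
Proof. by rewrite mem_sort (mem_map val_inj) mem_enum. Qed.

Lemma sJP n (J : {set 'I_n}) x : x \in sJ J -> exists2 i : 'I_n, i \in J & x = val i.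
Proof. by rewrite mem_sort => /mapP[i]; rewrite mem_enum; exists i. Qed.

Lemma sorted_sJ n (J : {set 'I_n}) : sorted ltn (sJ J).
Proof.
rewrite ltn_sorted_uniq_leq sort_uniq (map_inj_uniq val_inj) enum_uniq /=.
exact: (sort_sorted leq_total).
Qed.

Lemma size_sJ n (J : {set 'I_n}) : size (sJ J) = #|J|.
Proof. by rewrite size_sort size_map cardE. Qed.

Lemma des_sub_desn n x (J : {set 'I_n}) : des_sub x J = desn n x (sJ J).
Proof.
apply/forallP/desnP => [H i h1 h2 h3|H p].
  by move: (H (Ordinal h2)); rewrite -mem_sJ /= h1 h3.
apply/implyP => /andP[h1 h3]; rewrite -mem_sJ; exact: (H p h1 (ltn_ord p) h3).
Qed.

Lemma subs_sJ n (J : {set 'I_n}) : subJ J -> sJ J \in subs n.-1.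
Proof.
move=> /forallP hJ; rewrite mem_subs sorted_sJ /=; apply/allP => x /sJP[i hi ->].
by have := hJ i; rewrite hi /= => h; have := ltn_ord i; lia.
Qed.

Local Open Scope ring_scope.

Lemma sum_sets n (F : seq nat -> rat) :
  \sum_(J : {set 'I_n} | subJ J) F (sJ J) = \sum_(s <- subs n.-1) F s.
Proof.
have e : perm_eq [seq sJ J | J <- enum [pred J : {set 'I_n} | subJ J]] (subs n.-1).
  apply: uniq_perm; last 1 first.
  - move=> s; apply/mapP/idP => [[J hJ ->]|hs].
      by apply: subs_sJ; move: hJ; rewrite mem_enum.
    move: hs; rewrite mem_subs => /andP[hs ha].
    exists [set i : 'I_n | val i \in s].
      rewrite mem_enum /=; apply/forallP => i; apply/implyP; rewrite inE => hi.
      by have := allP ha _ hi; lia.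
    apply: (irr_sorted_eq ltn_trans ltnn hs (sorted_sJ _)) => x.
    apply/idP/idP => [hx|/sJP[i hi ->]]; last by move: hi; rewrite inE.
    have hxn : (x < n)%N by have := allP ha _ hx; lia.
    by rewrite -[x]/(val (Ordinal hxn)) mem_sJ inE.
  - rewrite map_inj_in_uniq ?enum_uniq // => J1 J2 _ _ eJ.
    by apply/setP => i; rewrite -!mem_sJ eJ.
  - exact: uniq_subs.
by rewrite -(perm_big _ e) big_map big_enum /=.
Qed.

Definition gsgn (v w : seq nat) (s : seq nat) : rat :=
  if desn (size v) (oneline_comp (oneline_inv w) (vcut v s)) s then (-1) ^+ (size s).+1 else 0.

Lemma lambda_sum v w : ((lambda v w)%:~R : rat) = \sum_(s <- subs (size v).-1) gsgn v w s.
Proof.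
have cE : forall A : {set {set 'I_(size v)}}, ((#|A|%:Z)%:~R : rat) = \sum_(J in A) 1.
  by move=> A; rewrite sumr_const.
rewrite -sum_sets /lambda rmorphB /= !cE.
rewrite (big_mkcond (fun J => J \in _)) [X in _ - X](big_mkcond (fun J => J \in _)) -sumrB.
rewrite (bigID (fun J => subJ J)) /= [X in _ + X]big1 ?addr0; last first.
  move=> J /negPf hJ; rewrite !inE /goodJ hJ /=; by rewrite subrr.
apply: eq_bigr => J hJ; rewrite !inE /goodJ hJ /= /gsgn.
rewrite des_sub_desn /vJ -/(sJ J) -/(vcut v (sJ J)) size_sJ.
case: (desn _ _ _) => /=; last by rewrite subrr.
by rewrite -signr_odd /=; case: (odd #|J|) => /=; rewrite ?expr1 ?expr0 ?subr0 ?sub0r.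
Qed.

End Part5.
Section Part6.

Lemma foldr_cuts_perm ps (s : seq nat) off : uniq s ->
  foldr cross [::] (map st (cuts s ps off)) \in perms (size s).
Proof.
elim: ps s off => [|q ps IH] s off us /=.
  by rewrite cross_nil_r; apply: st_perm.
rewrite -{3}(cat_take_drop (q - off) s) size_cat.
apply: cross_perm; first by apply: st_perm; rewrite take_uniq.
by apply: IH; rewrite drop_uniq.
Qed.

Lemma vcut_perm v ps : uniq v -> vcut v ps \in perms (size v).
Proof. exact: foldr_cuts_perm. Qed.

Lemma path0_sorted (l : seq nat) : path leq 0 l = sorted leq l.
Proof. by case: l. Qed.

Lemma desn_st_take n p (sig x : seq nat) ps : (p <= n)%N -> sig \in perms n -> x \in perms p ->
  desn p (oneline_comp sig x) ps = desn p (oneline_comp (st (take p sig)) x) ps.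
Proof.
move=> hp hs hx; set t := take p sig.
have st_ : size t = p by rewrite size_takel // (perms_size hs).
have ut : uniq t by rewrite take_uniq // (perms_uniq hs).
have e : oneline_comp (st t) x = map (rk t) (oneline_comp sig x).
  rewrite /oneline_comp stE -map_comp; apply/eq_in_map => i hi /=.
  have hi' : (i.-1 < p)%N by move: hi; rewrite (perms_mem _ hx); lia.
  by rewrite (nth_map 0) ?st_ // nth_take.
rewrite e desn_mono //; last by rewrite /oneline_comp size_map (perms_size hx).
move=> a b ha hb; apply: rk_mono => //.
  move: ha => /mapP[i hi ->]; have hi' : (i.-1 < p)%N by move: hi; rewrite (perms_mem _ hx); lia.
  by rewrite -(nth_take 0 hi') mem_nth ?st_.
move: hb => /mapP[i hi ->]; have hi' : (i.-1 < p)%N by move: hi; rewrite (perms_mem _ hx); lia.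
by rewrite -(nth_take 0 hi') mem_nth ?st_.
Qed.

Local Open Scope ring_scope.

Lemma core n p (sig c b : seq nat) s : (p <= n)%N -> sig \in perms n -> c \in perms p ->
  b \in perms (n - p) -> all (fun x => (x < p)%N) s ->
  \sum_(u <- perms p) (desn p (oneline_comp (oneline_inv u) c) s)%:R *
                      (desn n (oneline_comp sig (cross u b)) [:: p])%:R
  = (desn n (oneline_comp sig (cross c b)) (rcons s p))%:R :> rat.
Proof.
move=> hp hsig hc hb hs.
have hcat : forall x, x \in perms p -> forall ps, all (fun x => (x < p)%N) ps ->
    desn n (oneline_comp sig (cross x b)) (rcons ps p) =
    desn p (oneline_comp sig x) ps && desn (n - p) (oneline_comp sig (map (addn p) b)) [::].
  move=> x hx ps hps; rewrite comp_cross (perms_size hx); apply: desn_cat => //.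
  by rewrite /oneline_comp size_map (perms_size hx).
rewrite (hcat c hc s hs).
rewrite (eq_big_seq (fun u => (desn p (oneline_comp (oneline_inv u) c) s)%:R *
    (desn p (oneline_comp sig u) [::] && desn (n - p) (oneline_comp sig (map (addn p) b)) [::])%:R));
  last by move=> u hu; rewrite -(hcat u hu [::]).
case: (desn (n - p) _ _); last first.
  by rewrite andbF big1_seq // => u _; rewrite andbF mulr0.
set tau := st (take p sig).
have htau : tau \in perms p.
  have := @st_perm (take p sig); rewrite size_takel ?(perms_size hsig) //; apply.
  by rewrite take_uniq // (perms_uniq hsig).
rewrite andbT (eq_big_seq (fun u => (desn p (oneline_comp (oneline_inv u) c) s)%:R *
    (u == oneline_inv tau)%:R)); last first.
  move=> u hu; rewrite andbT (desn_st_take _ hp hsig hu) -/tau.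
  by rewrite desn_perm_nil ?comp_eq_id // comp_perm.
rewrite sum_pred1 ?perms_uniq_seq ?inv_perm // (inv_inv htau).
by rewrite (desn_st_take _ hp hsig hc).
Qed.

Lemma mulrF_ext (x y : Elt) b w : x =1 y -> mulrF x b w = mulrF y b w.
Proof. by move=> e; rewrite /mulrF; case: ifP => // _; apply: eq_bigr => u _; rewrite e. Qed.

Lemma mulrF_zero (x : Elt) b w p q : b \in perms q ->
  (forall u, x u != 0 -> u \in perms p) -> w \notin perms (p + q) -> mulrF x b w = 0.
Proof.
move=> hb hx hw; rewrite /mulrF; case: ifP => // hle; apply: big1_seq => u /andP[_ hu].
have [->|/hx hu'] := eqVneq (x u) 0; first by rewrite mul0r.
by rewrite (count_prodF0 hu' hb hw) mulr0.
Qed.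

Definition Lm (v w : seq nat) : rat :=
  if is_perm w && (size w == size v) then (lambda v w)%:~R else 0.

Lemma S_nil S (HS : is_antipode S) w : S [::] w = (w == [::])%:R.
Proof.
have := HS.2.1 [::] isT w; rewrite big_ord_recr big_ord0 /=.
rewrite add0r mul1r mulrF_nil // => w' hw'; exact: (HS.1 [::]).1 w' hw'.
Qed.

End Part6.
Section Part7.
Local Open Scope ring_scope.

Lemma gsgn_rcons v w s p : gsgn v w (rcons s p) =
  - (-1) ^+ (size s).+1 * (desn (size v) (oneline_comp (oneline_inv w) (vcut v (rcons s p))) (rcons s p))%:R.
Proof.
rewrite /gsgn size_rcons exprS; case: (desn _ _ _) => /=; first by rewrite mulr1 mulN1r.
by rewrite mulr0.
Qed.

Lemma gsgn_split a u s : gsgn a u s =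
  (desn (size a) (oneline_comp (oneline_inv u) (vcut a s)) s)%:R * (-1) ^+ (size s).+1.
Proof. by rewrite /gsgn; case: (desn _ _ _) => /=; rewrite ?mul1r ?mul0r. Qed.

Lemma main_aux S (HS : is_antipode S) m : forall v, (size v <= m)%N -> is_perm v ->
  (1 <= size v)%N -> forall w, S v w = Lm v w.
Proof.
elim: m => [|m IH] v hvm hv hn w; first lia.
have hvP : v \in perms (size v) by rewrite -is_permE.
have uv := perms_uniq hvP.
have hsupp : forall p, (p < size v)%N -> forall u, S (st (take p v)) u != 0 -> u \in perms p.
  move=> p hp u; case: p hp => [|p] hp.
    rewrite take0 /=; have := S_nil HS u; case: (u =P [::]) => [-> //|_ ->].
    by rewrite mulr0n eqxx.
  have ha : st (take p.+1 v) \in perms p.+1.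
    by have := @st_perm (take p.+1 v); rewrite size_takel ?take_uniq //; [apply|lia].
  rewrite IH ?size_st ?is_permE ?(perms_size ha) //; try lia.
  by rewrite /Lm; case: ifP => // /andP[hu /eqP hs] _; rewrite -(perms_size ha) -hs -is_permE.
have E := HS.2.1 v hv w.
rewrite big_ord_recr /= take_size drop_size (st_id hvP) /= mulrF_nil in E; last first.
  by move=> w' hw'; exact: (HS.1 v).1 w' hw'.
have Ez : (size v == 0%N) = false by move: hn; case: (size v).
rewrite Ez mul0r addrC in E.
have -> : S v w = - \sum_(i < size v) mulrF (S (st (take i v))) (st (drop i v)) w.
  by apply/eqP; rewrite -addr_eq0 E.
apply/eqP; rewrite eqr_oppLR; apply/eqP.
have [n' En] : exists n', size v = n'.+1 by exists (size v).-1; lia.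
have hab : forall p, (p <= size v)%N ->
    st (take p v) \in perms p /\ st (drop p v) \in perms (size v - p).
  move=> p hp; split.
    by have := @st_perm (take p v); rewrite size_takel ?take_uniq //; apply.
  by have := @st_perm (drop p v); rewrite size_drop ?drop_uniq //; apply.
case hc : (is_perm w && (size w == size v)); last first.
  rewrite /Lm hc oppr0; apply: big1 => [[p hp]] _ /=.
  have [ha hb] := hab p (ltnW hp).
  apply: (mulrF_zero (p := p) hb (hsupp p hp)).
  rewrite subnKC ?(ltnW hp) //; apply: contraFN hc => hw.
  by rewrite is_permE (perms_size hw) hw eqxx.
have hw : w \in perms (size v).
  by move: hc => /andP[]; rewrite is_permE => h /eqP <-.
have swv : size w = size v by rewrite (perms_size hw).
rewrite /Lm hc lambda_sum En /= sum_subs opprD.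
rewrite big_ord_recl /=; congr (_ + _).
  rewrite take0 drop0 (st_id hvP) /= /mulrF swv leqnn subnn /=.
  rewrite big_seq1 (S_nil HS) eqxx mul1r.
  have hw0 : w \in perms (0 + size v) by rewrite add0n.
  rewrite (@count_prodF 0 (size v) [::] v w) // cross_nil_l add0n.
  rewrite /gsgn vcut_nil (st_id hvP) (@desn_eq _ _ _ [::]); last first.
    by move=> i hi _; rewrite !inE; apply/negbTE; rewrite -lt0n.
  by case: (desn _ _ _) => /=; rewrite ?expr1 ?opprK ?oppr0.
rewrite -sumrN; apply: eq_bigr => p _.
rewrite (_ : bump 0 p = p.+1) //.
have hp1 : (p.+1 <= size v)%N by rewrite En ltnS ltnW.
have [ha hb] := hab p.+1 hp1.
set a := st (take p.+1 v); set b := st (drop p.+1 v).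
have sa : size a = p.+1 by rewrite (perms_size ha).
rewrite (@mulrF_ext _ (Lm a)); last first.
  move=> u; apply: IH; rewrite ?sa ?is_permE ?sa //; have := ltn_ord p; lia.
rewrite /mulrF (perms_size hb) swv leq_subr.
have -> : (size v - (size v - p.+1))%N = p.+1 by lia.
have hwN : w \in perms (p.+1 + (size v - p.+1)) by rewrite subnKC.
rewrite (eq_big_seq (fun u => (\sum_(s <- subs p) gsgn a u s) *
   (desn (p.+1 + (size v - p.+1)) (oneline_comp (oneline_inv w) (cross u b)) [:: p.+1])%:R));
  last first.
  move=> u hu; rewrite (count_prodF hu hb hwN) /Lm is_permE (perms_size hu) sa eqxx hu /=.
  by rewrite lambda_sum sa.
rewrite (eq_bigr (fun u => \sum_(s <- subs p) gsgn a u s *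
   (desn (p.+1 + (size v - p.+1)) (oneline_comp (oneline_inv w) (cross u b)) [:: p.+1])%:R));
  last by move=> u _; rewrite mulr_suml.
rewrite exchange_big /= -sumrN; apply: eq_big_seq => s hs.
have hs' := hs; rewrite mem_subs in hs'; case/andP: hs' => hs1 hs2.
have hsp : all (fun x => (x < p.+1)%N) s by apply: sub_all hs2 => x; lia.
rewrite (eq_bigr (fun u => (-1) ^+ (size s).+1 *
  ((desn p.+1 (oneline_comp (oneline_inv u) (vcut a s)) s)%:R *
   (desn (p.+1 + (size v - p.+1)) (oneline_comp (oneline_inv w) (cross u b)) [:: p.+1])%:R)));
  last by move=> u _; rewrite gsgn_split sa [RHS]mulrA [(-1) ^+ _ * _]mulrC.
rewrite -mulr_sumr.
have hsig : oneline_inv w \in perms (p.+1 + (size v - p.+1)) by apply: inv_perm.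
have hc' : vcut a s \in perms p.+1 by rewrite -sa; apply: vcut_perm; apply: perms_uniq ha.
have hb' : b \in perms (p.+1 + (size v - p.+1) - p.+1) by rewrite addKn.
rewrite (core (leq_addr _ _) hsig hc' hb' hsp).
rewrite gsgn_rcons mulNr opprK subnKC //.
rewrite vcut_rcons //.
rewrite path0_sorted; apply: (sub_sorted (e := ltn)) => [x y /ltnW //|].
rewrite sorted_rcons_ltn hs1 /=; exact: hsp.
Qed.

End Part7.
Unset Implicit Arguments. Set Strict Implicit.
Local Open Scope ring_scope.

Theorem mainTheorem8 (S : seq nat -> Elt) (HS : is_antipode S)
  (v : seq nat) (hv : is_perm v) (hn : (1 <= size v)%N) (w : seq nat) :
  S v w = if is_perm w && (size w == size v) then (lambda v w)%:~R else 0.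
Proof.
exact: (main_aux HS (leqnn (size v)) hv hn w).
Qed.
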